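(* Assume the bounded-cost assumption, $J\ge2$, and $T=\Omega(J^2\bar L_T)$ where $\bar L_T=\max_jL^j_T$. If all agents use POMWU with learning rate $\eta^\star=\Theta\big(J^{-1/2}T^{-1/4}[\ln K(\bar L_T+m)]^{1/4}\big)$, then the map $\hat{\boldsymbol\nu}_T$ is an $\varepsilon$-contextual coarse correlated equilibrium with $$\varepsilon=O\big([\ln K(\bar L_T+m)]^{3/4}T^{-3/4}J^{1/2}\big).$$
   Context: Setting. There are $J$ agents indexed by $j\in[J]$. Agent $j$ has a finite action set $\mathcal A^j=\{a^j_1,\dots,a^j_K\}$ with $K$ elements; $\mathcal A=\prod_i\mathcal A^i$, $\mathcal A^{-j}=\prod_{i\ne j}\mathcal A^i$. $\Delta_K$ is the probability simplex in $\mathbb R^K$, $w\in\Delta_K$ identified with a distribution on $\mathcal A^j$; $\mathscr P(S)$ is the set of distributions on a finite set $S$. The context set $\mathcal Z=\{z_1,\dots,z_m\}\subset\mathbb R^d$ is finite with $m$ elements. Agent $j$ has $\phi^j:\mathcal A\to\mathbb R^d$ and cost $c^j(\mathbf w,Z)=\mathbb E_{\mathbf a\sim\mathbf w}[\langle\phi^j(\mathbf a),Z\rangle]$; $c^j(w,\mathbf w^{-j},Z)=c^j(w\otimes\mathbf w^{-j},Z)$. $\Phi^j(\mathbf w^{-j})\in\mathbb R^{d\times K}$ has entries $\Phi^j(\mathbf w^{-j})_{\ell,k}=\mathbb E_{\mathbf a^{-j}\sim\mathbf w^{-j}}[\phi^j(a^j_k,\mathbf a^{-j})[\ell]]$. Bounded-cost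 assumption: $|\langle Z,\phi^j(\mathbf a)\rangle|\le1$ for all $j,\mathbf a,Z$. Game protocol: $T$ rounds, fixed sequence $Z_1,\dots,Z_T\in\mathcal Z$; at round $t$ each agent $j$ receives a prediction $\hat Z^j_t\in\mathcal Z$, plays $w^j_t\in\Delta_K$, incurs $c^j(w^j_t,\mathbf w^{-j}_t,Z_t)$ with $\mathbf w^{-j}_t=\bigotimes_{i\ne j}w^i_t$, and observes $Z_t$ and $\Phi^j(\mathbf w^{-j}_t)$. $\mathscr T^z=\{t:Z_t=z\}$, $n_z=|\mathscr T^z|$, $L^j_T=\sum_{t}\mathbf 1\{\hat Z^j_t\ne Z_t\}$. POMWU with learning rate $\eta>0$ (for agent $j$): maintain for each $z\in\mathcal Z$ a vector $\rho_z\in\mathbb R^K_{>0}$, initialized to $(1/K,\dots,1/K)$, and a matrix $\Psi_z\in\mathbb R^{d\times K}$, initialized to $0$. At round $t$, with $\hat Z=\hat Z^j_t$, play $w^j_t[\ell]=\rho_{\hat Z}[\ell]\exp(-\eta(\Psi_{\hat Z}^\top\hat Z)[\ell])/\sum_{k=1}^K\rho_{\hat Z}[k]\exp(-\eta(\Psi_{\hat Z}^\top\hat Z)[k])$. After observing $Z_t$ and $\Phi_t=\Phi^j(\mathbf w^{-j}_t)$, set $\Psi_{Z_t}\leftarrow\Phi_t$ and $\rho_{Z_t}[\ell]\leftarrow\rho_{Z_t}[\ell]\exp(-\eta(\Phi_t^\top Z_t)[\ell])$ for all $\ell$. $\hat{\boldsymbol\nu}_T:\mathcal Z\to\mathscr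 P(\mathcal A)$: $\hat{\boldsymbol\nu}_T(z)=n_z^{-1}\sum_{t\in\mathscr T^z}w^1_t\otimes\dots\otimes w^J_t$ if $n_z>0$, the uniform distribution on $\mathcal A$ otherwise. For $\boldsymbol\nu:\mathcal Z\to\mathscr P(\mathcal A)$, $\boldsymbol\nu^{-j}(z)$ is the marginal of $\boldsymbol\nu(z)$ on $\mathcal A^{-j}$. An $\varepsilon$-contextual coarse correlated equilibrium is $\boldsymbol\nu:\mathcal Z\to\mathscr P(\mathcal A)$ such that for every $j$ and every $\pi:\mathcal Z\to\Delta_K$, $T^{-1}\sum_tc^j(\boldsymbol\nu(Z_t),Z_t)\le T^{-1}\sum_tc^j(\pi(Z_t),\boldsymbol\nu^{-j}(Z_t),Z_t)+\varepsilon$. $O,\Omega,\Theta$ hide absolute constants. *)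

(* Defs.v *)
From HB Require Import structures.
From mathcomp Require Import all_boot all_order all_algebra.
From mathcomp Require Import all_classical all_reals all_analysis.
Set Implicit Arguments. Unset Strict Implicit. Unset Printing Implicit Defensive.
Import Order.TTheory GRing.Theory Num.Theory.
Local Open Scope ring_scope.

Section ContextualGame.
Variables (R : realType) (J K d m : nat).
Local Notation joint := {ffun 'I_J -> 'I_K}.

Definition ip (u v : 'rV[R]_d) : R := \sum_(l < d) u 0 l * v 0 l.

Definition in_simplex (w : 'I_K -> R) : Prop :=
  (forall k, 0 <= w k) /\ \sum_(k < K) w k = 1.

Definition prod_dist (W : 'I_J -> 'I_K -> R) (a : joint) : R :=
  \prod_(i < J) W i (a i).

Definition exp_cost (phij : joint -> 'rV[R]_d) (mu : joint -> R)
    (Z : 'rV[R]_d) : R :=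
  \sum_(a : joint) mu a * ip (phij a) Z.

Definition agree_off (j : 'I_J) (a b : joint) : bool :=
  [forall i, (i != j) ==> (a i == b i)].

(* the marginal mu^{-j} on A^{-j}, evaluated at a^{-j} (the j-th coordinate
   of a is ignored) *)
Definition marginal_minus (j : 'I_J) (mu : joint -> R) (a : joint) : R :=
  \sum_(b : joint | agree_off j a b) mu b.

Definition dev_dist (j : 'I_J) (w : 'I_K -> R) (mu : joint -> R)
    (a : joint) : R :=
  w (a j) * marginal_minus j mu a.

(* Phi^j(w^{-j})_{l,k} = E_{a^{-j} ~ w^{-j}} [phi^j(a^j_k, a^{-j})[l]];
   a^{-j} is enumerated as the joint actions a with a j = k. *)
Definition Phi (phij : joint -> 'rV[R]_d) (j : 'I_J)
    (W : 'I_J -> 'I_K -> R) : 'M[R]_(d, K) :=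
  \matrix_(l < d, k < K)
    \sum_(a : joint | a j == k) (\prod_(i < J | i != j) W i (a i)) * phij a 0 l.

(* POMWU state of all agents: for each agent j and context index z,
   rho_z in R^K and Psi_z in R^{d x K}. Contexts are indexed by 'I_m. *)
Record pomwu_state := PState {
  st_rho : 'I_J -> 'I_m -> 'I_K -> R;
  st_Psi : 'I_J -> 'I_m -> 'M[R]_(d, K) }.

Definition pomwu_init : pomwu_state :=
  PState (fun _ _ _ => (K%:R)^-1) (fun _ _ => 0).

(* strategy of agent j given prediction index zh; note (Psi^T Z)[l] = (Z *m Psi) 0 l *)
Definition pomwu_play (eta : R) (z : 'I_m -> 'rV[R]_d) (st : pomwu_state)
    (j : 'I_J) (zh : 'I_m) : 'I_K -> R :=
  fun l =>
    (st_rho st j zh l * expR (- eta * (z zh *m st_Psi st j zh) 0 l)) /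
    \sum_(k < K) st_rho st j zh k * expR (- eta * (z zh *m st_Psi st j zh) 0 k).

Definition pomwu_update (eta : R) (z : 'I_m -> 'rV[R]_d)
    (phi : 'I_J -> joint -> 'rV[R]_d) (st : pomwu_state) (zt : 'I_m)
    (W : 'I_J -> 'I_K -> R) : pomwu_state :=
  PState
    (fun j zz l => if zz == zt then
        st_rho st j zz l * expR (- eta * (z zt *m Phi (phi j) j W) 0 l)
      else st_rho st j zz l)
    (fun j zz => if zz == zt then Phi (phi j) j W else st_Psi st j zz).

(* Zs t = index of the realized context Z_t ; Zhat j t = index of agent j's
   prediction at round t (rounds are t = 0, 1, ...) *)
Fixpoint pomwu_states (eta : R) (z : 'I_m -> 'rV[R]_d)
    (phi : 'I_J -> joint -> 'rV[R]_d) (Zs : nat -> 'I_m)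
    (Zhat : 'I_J -> nat -> 'I_m) (t : nat) : pomwu_state :=
  match t with
  | 0 => pomwu_init
  | t'.+1 =>
      let st := pomwu_states eta z phi Zs Zhat t' in
      pomwu_update eta z phi st (Zs t')
        (fun j => pomwu_play eta z st j (Zhat j t'))
  end.

Definition pomwu_profile (eta : R) (z : 'I_m -> 'rV[R]_d)
    (phi : 'I_J -> joint -> 'rV[R]_d) (Zs : nat -> 'I_m)
    (Zhat : 'I_J -> nat -> 'I_m) (t : nat) : 'I_J -> 'I_K -> R :=
  fun j => pomwu_play eta z (pomwu_states eta z phi Zs Zhat t) j (Zhat j t).

Definition n_ctx (T : nat) (Zs : nat -> 'I_m) (zz : 'I_m) : nat :=
  \sum_(t < T) (Zs t == zz).

Definition nu_hat (T : nat) (W : nat -> 'I_J -> 'I_K -> R) (Zs : nat -> 'I_m)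
    (zz : 'I_m) (a : joint) : R :=
  if (0 < n_ctx T Zs zz)%N then
    (n_ctx T Zs zz)%:R^-1 * \sum_(t < T | Zs t == zz) prod_dist (W t) a
  else (#|{: joint}|%:R)^-1.

Definition mistakes (T : nat) (Zs : nat -> 'I_m) (Zhat : 'I_J -> nat -> 'I_m)
    (j : 'I_J) : nat :=
  \sum_(t < T) (Zhat j t != Zs t).

Definition max_mistakes (T : nat) (Zs : nat -> 'I_m)
    (Zhat : 'I_J -> nat -> 'I_m) : nat :=
  \max_(j < J) mistakes T Zs Zhat j.

Definition is_contextual_CCE (T : nat) (z : 'I_m -> 'rV[R]_d)
    (phi : 'I_J -> joint -> 'rV[R]_d) (Zs : nat -> 'I_m)
    (nu : 'I_m -> joint -> R) (eps : R) : Prop :=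
  forall (j : 'I_J) (pi : 'I_m -> 'I_K -> R),
    (forall zz, in_simplex (pi zz)) ->
    T%:R^-1 * \sum_(t < T) exp_cost (phi j) (nu (Zs t)) (z (Zs t))
    <= T%:R^-1 * \sum_(t < T)
         exp_cost (phi j) (dev_dist j (pi (Zs t)) (nu (Zs t))) (z (Zs t))
       + eps.

End ContextualGame.

(* Main.v *)
Require Import Defs.
From HB Require Import structures.
From mathcomp Require Import all_boot all_order all_algebra.
From mathcomp Require Import all_classical all_reals all_analysis.
From mathcomp Require Import ring lra.
Import Order.TTheory GRing.Theory Num.Theory.
Local Open Scope ring_scope.

Section Scalar.
Variable R : realType.

Lemma simplex_ge0 {K : nat} (w : 'I_K -> R) k : in_simplex w -> 0 <= w k.
Proof. by case. Qed.
Lemma simplex_sum {K : nat} (w : 'I_K -> R) : in_simplex w -> \sum_k w k = 1.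
Proof. by case. Qed.

Lemma exp_le_inv (y : R) : y < 1 -> expR y <= (1 - y)^-1.
Proof.
move=> hy; have h := expR_ge1Dx (- y).
have p : 0 < 1 - y by lra.
rewrite -[expR y]invrK -expRN lef_pV2 ?posrE ?expR_gt0 //; lra.
Qed.

Lemma exp_quad (y : R) : y <= 1/2 -> expR y <= 1 + y + 2 * y ^+ 2.
Proof.
move=> hy; have hy1 : y < 1 by lra.
apply: le_trans (exp_le_inv y hy1) _.
have p : 0 < 1 - y by lra.
rewrite -[(1 - y)^-1]mulr1 ler_pdivrMl //.
have : 0 <= y ^+ 2 * (1 - 2 * y) by apply: mulr_ge0; [exact: sqr_ge0|lra].
rewrite expr2 => h; nra.
Qed.

Lemma exp_lin (y : R) : 0 <= y -> y <= 1/2 -> expR y - 1 <= 2 * y.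
Proof.
move=> h0 h1; have := exp_quad y h1; rewrite expr2 => h; nra.
Qed.

Lemma ln_le_sub1 (x : R) : 0 < x -> ln x <= x - 1.
Proof.
move=> hx; have h := @le_ln1Dx R (x - 1).
have e : 1 + (x - 1) = x by ring.
rewrite e in h; apply: h; lra.
Qed.
End Scalar.
Arguments simplex_sum {R K} w _.
Arguments exp_quad {R} y _.
Arguments exp_le_inv {R} y _.
Arguments exp_lin {R} y _ _.
Arguments ln_le_sub1 {R} x _.
Arguments simplex_ge0 {R K} w k _.

Section Soft.
Variables (R : realType) (K : nat) (eta : R).
Hypothesis K0 : (0 < K)%N.

Definition sm (rho h : 'I_K -> R) (l : 'I_K) : R :=
  rho l * expR (- eta * h l) / \sum_(k < K) rho k * expR (- eta * h k).

Lemma pos_sum (f : 'I_K -> R) : (forall k, 0 < f k) -> 0 < \sum_k f k.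
Proof.
move=> hf; rewrite (bigD1 (Ordinal K0)) //=.
have := hf (Ordinal K0); have : 0 <= \sum_(i < K | i != Ordinal K0) f i.
  by apply: sumr_ge0 => i _; exact: ltW.
lra.
Qed.

Lemma sm_den_pos (rho h : 'I_K -> R) : (forall k, 0 < rho k) ->
  0 < \sum_k rho k * expR (- eta * h k).
Proof. by move=> hr; apply: pos_sum => k; apply: mulr_gt0 => //; exact: expR_gt0. Qed.

Lemma sm_simplex (rho h : 'I_K -> R) : (forall k, 0 < rho k) -> in_simplex (sm rho h).
Proof.
move=> hr; have hS := sm_den_pos rho h hr; split.
  move=> k; rewrite /sm; apply: divr_ge0; last exact: ltW.
  by apply: mulr_ge0; [exact: ltW|exact: expR_ge0].
by rewrite /sm -mulr_suml divff // lt0r_neq0.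
Qed.

Lemma sm_shift (rho c h : 'I_K -> R) l :
  sm (fun k => rho k * expR (- eta * c k)) h l = sm rho (fun k => c k + h k) l.
Proof.
rewrite /sm; under eq_bigr do rewrite -mulrA -expRD -mulrDr.
by rewrite -[rho l * _ * _]mulrA -expRD -mulrDr.
Qed.

Lemma sm_sum (rho h w : 'I_K -> R) : (forall k, 0 < rho k) ->
  \sum_k rho k * expR (- eta * h k) * w k =
  (\sum_k rho k * expR (- eta * h k)) * \sum_k sm rho h k * w k.
Proof.
move=> hr; have hS := sm_den_pos rho h hr.
rewrite mulr_sumr; apply: eq_bigr => k _; rewrite /sm.
by field; rewrite lt0r_neq0.
Qed.

Lemma sm_stab (rho a b : 'I_K -> R) (D : R) : (forall k, 0 < rho k) -> 0 <= eta ->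
  0 <= D -> eta * D <= 1/4 -> (forall k, `|a k - b k| <= D) ->
  \sum_k `|sm rho b k - sm rho a k| <= 4 * (eta * D).
Proof.
move=> hr he hD hx hab.
rewrite -[eta * D]/(eta * D) in hx *.
have [x xE] : exists x, x = eta * D by eexists.
rewrite -xE in hx *.
have x0 : 0 <= x by rewrite xE mulr_ge0.
set Sa := \sum_k rho k * expR (- eta * a k).
have hSa : 0 < Sa := sm_den_pos rho a hr.
pose p k := sm rho a k.
pose e k := expR (- eta * (b k - a k)).
pose mu := \sum_k p k * e k.
have hp := sm_simplex rho a hr.
have ebnd k : expR (- x) <= e k /\ e k <= expR x.
  have := hab k; rewrite ler_norml => /andP[h1 h2].
  by split; rewrite ler_expR xE; nra.
have s1 c : \sum_k p k * c = c by rewrite -mulr_suml (simplex_sum _ hp) mul1r.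
have mubnd : expR (- x) <= mu /\ mu <= expR x.
  split; [rewrite -{1}(s1 (expR (- x))) | rewrite -[X in _ <= X](s1 (expR x))];
    apply: ler_sum => k _; apply: ler_wpM2l; try exact: (simplex_ge0 _ _ hp).
    exact: (ebnd k).1.
  exact: (ebnd k).2.
have mupos : 0 < mu by apply: lt_le_trans (expR_gt0 _) mubnd.1.
have num k : rho k * expR (- eta * b k) = rho k * expR (- eta * a k) * e k.
  by rewrite /e -mulrA -expRD; congr (_ * expR _); ring.
have den : \sum_k rho k * expR (- eta * b k) = Sa * mu.
  by rewrite /Sa /mu -sm_sum //; apply: eq_bigr => k _; rewrite num.
have sbk k : sm rho b k = p k * e k / mu.
  rewrite {1}/sm den num /p /sm -/Sa.
  by field; rewrite !lt0r_neq0.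
have e2 : expR (2 * x) - 1 <= 4 * x.
  by apply: le_trans (exp_lin (2 * x) _ _) _; lra.
have e3 : 1 - expR (- (2 * x)) <= 2 * x.
  have := expR_ge1Dx (- (2 * x)); lra.
rewrite -[X in _ <= X](s1 (4 * x)); apply: ler_sum => k _.
rewrite sbk /p.
have pk0 : 0 <= sm rho a k by exact: (simplex_ge0 _ _ hp).
have -> : sm rho a k * e k / mu - sm rho a k = sm rho a k * (e k / mu - 1).
  by field; rewrite lt0r_neq0.
rewrite normrM (ger0_norm pk0); apply: ler_wpM2l => //.
have r1 : e k / mu <= expR (2 * x).
  rewrite ler_pdivrMr //.
  apply: le_trans (ebnd k).2 _.
  have -> : expR x = expR (2 * x) * expR (- x) by rewrite -expRD; congr expR; ring.
  by apply: ler_wpM2l; [exact: expR_ge0 | exact: mubnd.1].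
have r2 : expR (- (2 * x)) <= e k / mu.
  rewrite ler_pdivlMr //.
  apply: le_trans _ (ebnd k).1.
  have -> : expR (- x) = expR (- (2 * x)) * expR x by rewrite -expRD; congr expR; ring.
  by apply: ler_wpM2l; [exact: expR_ge0 | exact: mubnd.2].
rewrite ler_norml; apply/andP; split; lra.
Qed.

Lemma lnM' (x y : R) : 0 < x -> 0 < y -> ln (x * y) = ln x + ln y.
Proof. by move=> hx hy; apply: lnM; rewrite posrE. Qed.

Definition Hf (rho p : 'I_K -> R) : R :=
  (\sum_k p k * ln (rho k) - ln (\sum_k rho k)) / eta.

Lemma H_step (rho h u p : 'I_K -> R) (M : R) : (forall k, 0 < rho k) ->
  0 < eta -> eta <= 1/4 -> in_simplex p ->
  (forall k, `|u k - h k| <= 2) -> (forall k, (u k - h k) ^+ 2 <= M) ->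
  \sum_k (sm rho h k - p k) * u k <=
  Hf (fun k => rho k * expR (- eta * u k)) p - Hf rho p + 2 * eta * M.
Proof.
move=> hr he he4 hp hd hM.
have hV := sm_simplex rho h hr.
have V0 k : 0 <= sm rho h k := simplex_ge0 _ k hV.
set V := sm rho h in hV V0 *.
have hSh := sm_den_pos rho h hr.
set Sh := \sum_k rho k * expR (- eta * h k) in hSh *.
set A := \sum_k V k * expR (- eta * (u k - h k)).
set B := \sum_k V k * expR (eta * h k).
have eSu : \sum_k rho k * expR (- eta * u k) = Sh * A.
  rewrite /A -sm_sum //; apply: eq_bigr => k _.
  by rewrite -mulrA -expRD; congr (_ * expR _); ring.
have eS0 : \sum_k rho k = Sh * B.
  rewrite /B -sm_sum //; apply: eq_bigr => k _.
  by rewrite -mulrA -expRD (_ : - eta * h k + eta * h k = 0) ?expR0 ?mulr1 //; ring.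
have hA : 0 < A.
  by rewrite -(pmulr_rgt0 _ hSh) -eSu; exact: sm_den_pos.
have hB : 0 < B.
  by rewrite -(pmulr_rgt0 _ hSh) -eS0; apply: pos_sum.
have s1 (c : R) : \sum_k V k * c = c by rewrite -mulr_suml (simplex_sum _ hV) mul1r.
have Aub : A <= 1 - eta * (\sum_k V k * (u k - h k)) + 2 * eta ^+ 2 * M.
  apply: (@le_trans _ _ (\sum_k (V k + (- eta) * (V k * (u k - h k)) + (2 * eta ^+ 2) * (V k * M)))).
    apply: ler_sum => k _.
    have hy : - eta * (u k - h k) <= 1/2.
      have := hd k; rewrite ler_norml => /andP[h1 h2]; nra.
    have e := exp_quad _ hy.
    apply: le_trans (ler_wpM2l (V0 k) e) _.
    have hh : 0 <= V k * eta ^+ 2 * (M - (u k - h k) ^+ 2).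
      apply: mulr_ge0; [apply: mulr_ge0 => //; exact: sqr_ge0|].
      by have := hM k; lra.
    move: hh; rewrite !expr2 => hh; nra.
  rewrite !big_split /= -!mulr_sumr s1 (simplex_sum _ hV); lra.
have lnA : ln A <= - eta * (\sum_k V k * (u k - h k)) + 2 * eta ^+ 2 * M.
  by apply: le_trans (ln_le_sub1 _ hA) _; lra.
set c := eta * \sum_k V k * h k.
have Blb : expR c <= B.
  apply: (@le_trans _ _ (\sum_k V k * (expR c * (1 + (eta * h k - c))))).
    rewrite (_ : \sum_k V k * (expR c * (1 + (eta * h k - c))) =
       \sum_k (expR c * (1 - c) * V k + (expR c * eta) * (V k * h k))); last first.
      by apply: eq_bigr => k _; ring.
    rewrite big_split /= -!mulr_sumr (simplex_sum _ hV) -/c.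
    rewrite le_eqVlt; apply/orP; left; apply/eqP; rewrite /c; ring.
  apply: ler_sum => k _; apply: ler_wpM2l => //.
  have -> : expR (eta * h k) = expR c * expR (eta * h k - c).
    by rewrite -expRD; congr expR; ring.
  apply: ler_wpM2l; [exact: expR_ge0 | exact: expR_ge1Dx].
have lnB : c <= ln B.
  by rewrite -[X in X <= _]expRK ler_ln ?posrE ?expR_gt0.
have hdiff : Hf (fun k => rho k * expR (- eta * u k)) p - Hf rho p =
    (- eta * (\sum_k p k * u k) - ln A + ln B) / eta.
  rewrite /Hf eSu eS0 !lnM' //.
  rewrite (eq_bigr (fun k => p k * ln (rho k) + (- eta) * (p k * u k))); last first.
    by move=> k _; rewrite lnM' ?expR_gt0 // expRK; ring.
  rewrite big_split /= -mulr_sumr.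
  by field; rewrite lt0r_neq0.
rewrite hdiff.
have -> : \sum_k (V k - p k) * u k = \sum_k V k * u k - \sum_k p k * u k.
  by rewrite -sumrB; apply: eq_bigr => k _; ring.
have eVd : \sum_k V k * (u k - h k) = \sum_k V k * u k - \sum_k V k * h k.
  by rewrite -sumrB; apply: eq_bigr => k _; ring.
rewrite eVd in lnA.
have key : \sum_k V k * u k - 2 * eta * M <= (ln B - ln A) / eta.
  rewrite ler_pdivlMr //; move: lnA lnB; rewrite /c !expr2 => l1 l2; nra.
have -> : (- eta * (\sum_k p k * u k) - ln A + ln B) / eta =
   - (\sum_k p k * u k) + (ln B - ln A) / eta.
  by field; rewrite lt0r_neq0.
lra.
Qed.

Lemma Hf_le0 (rho p : 'I_K -> R) : (forall k, 0 < rho k) -> 0 < eta ->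
  in_simplex p -> Hf rho p <= 0.
Proof.
move=> hr he hp; rewrite /Hf pmulr_lle0 ?invr_gt0 // subr_le0.
have hS : 0 < \sum_k rho k by apply: pos_sum.
rewrite -[X in _ <= X]mul1r -(simplex_sum _ hp) mulr_suml.
apply: ler_sum => k _; apply: ler_wpM2l; first exact: simplex_ge0 _ k hp.
rewrite ler_ln ?posrE //.
rewrite (bigD1 k) //= lerDl; apply: sumr_ge0 => i _; exact: ltW.
Qed.

Lemma Hf_init (p : 'I_K -> R) : in_simplex p ->
  Hf (fun _ => (K%:R)^-1) p = - ln (K%:R) / eta.
Proof.
move=> hp; rewrite /Hf -mulr_suml (simplex_sum _ hp) mul1r.
have -> : \sum_(k < K) (K%:R)^-1 = 1 :> R.
  rewrite sumr_const card_ord -[_ *+ K]mulr_natl mulfV //.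
  by rewrite pnatr_eq0 -lt0n.
rewrite ln1 subr0 lnV ?posrE ?ltr0n //.
Qed.
End Soft.

Section Game.
Variables (R : realType) (J K d : nat).
Variable (phi : 'I_J -> {ffun 'I_J -> 'I_K} -> 'rV[R]_d).
Local Notation joint := {ffun 'I_J -> 'I_K}.

Definition ucost (j : 'I_J) (X : 'I_J -> 'I_K -> R) (Z : 'rV[R]_d) (k : 'I_K) : R :=
  (Z *m Phi (phi j) j X) 0 k.

Lemma ucostE j X Z k : ucost j X Z k =
  \sum_(a : joint | a j == k) (\prod_(i < J | i != j) X i (a i)) * ip (phi j a) Z.
Proof.
rewrite /ucost !mxE.
under eq_bigr => l _ do rewrite mxE mulr_sumr.
rewrite (exchange_big_dep (fun a : joint => a j == k)) //=.
apply: eq_bigr => a ha.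
rewrite (eq_bigl (fun _ => true)); last by move=> l; rewrite ha.
rewrite /ip.
rewrite mulr_sumr; apply: eq_bigr => l _.
by rewrite mulrCA [Z 0 l * _]mulrC.
Qed.

Lemma ucost_ext j X Y Z k : (forall i k, i != j -> X i k = Y i k) ->
  ucost j X Z k = ucost j Y Z k.
Proof.
move=> h; rewrite !ucostE; apply: eq_bigr => a _; congr (_ * _).
by apply: eq_bigr => i hi; rewrite h.
Qed.

Lemma prodF_sum (F : 'I_J -> 'I_K -> R) :
  \sum_(a : joint) \prod_i F i (a i) = \prod_i \sum_k F i k.
Proof. by rewrite (bigA_distr_bigA F). Qed.


Lemma sum_ind (k : 'I_K) : \sum_(k' < K) (k' == k)%:R = 1 :> R.
Proof.
rewrite (bigD1 k) //= eqxx big1 ?addr0 // => i /negbTE -> //.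
Qed.

Lemma sum_prod_off j k (X : 'I_J -> 'I_K -> R) :
  (forall i, i != j -> in_simplex (X i)) ->
  \sum_(a : joint | a j == k) \prod_(i | i != j) X i (a i) = 1.
Proof.
move=> hX.
pose F i k' := if i == j then (k' == k)%:R else X i k'.
transitivity (\sum_(a : joint) \prod_i F i (a i)).
  rewrite big_mkcond; apply: eq_bigr => a _.
  rewrite [RHS](bigD1 j) //= {1}/F eqxx.
  rewrite [in RHS](eq_bigr (fun i => X i (a i))); last by move=> i /negbTE hi; rewrite /F hi.
  by case: (a j == k); rewrite ?mul1r ?mul0r.
rewrite prodF_sum (bigD1 j) //= {1}/F eqxx sum_ind mul1r.
rewrite big1 // => i hi; rewrite /F (negbTE hi); exact: simplex_sum _ (hX i hi).
Qed.

Variable Pz : 'rV[R]_d -> Prop.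
Hypothesis bnd : forall j a (Z : 'rV[R]_d), Pz Z -> `|ip (phi j a) Z| <= 1.

Lemma ucost_bound j X Z k : Pz Z -> (forall i, i != j -> in_simplex (X i)) ->
  `|ucost j X Z k| <= 1.
Proof.
move=> hZ hX; rewrite ucostE -[Y in _ <= Y](@sum_prod_off j k X hX).
apply: le_trans (ler_norm_sum _ _ _) _; apply: ler_sum => a _.
rewrite normrM ger0_norm; last by apply: prodr_ge0 => i hi; exact: simplex_ge0 _ _ (hX i hi).
rewrite -[Y in _ <= Y]mulr1; apply: ler_wpM2l; last exact: (bnd _ _ _ hZ).
by apply: prodr_ge0 => i hi; exact: simplex_ge0 _ _ (hX i hi).
Qed.

Lemma ucost_step j X Y Z r k : Pz Z -> (forall i, i != r -> X i = Y i) ->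
  (forall i, i != r -> in_simplex (X i)) ->
  `|ucost j X Z k - ucost j Y Z k| <= \sum_k' `|X r k' - Y r k'|.
Proof.
move=> hZ hXY hX; rewrite !ucostE -sumrB.
case: (eqVneq r j) => [erj|hrj].
  rewrite big1 ?normr0 ?sumr_ge0 // => a _.
  rewrite (eq_bigr (fun i => Y i (a i))) ?subrr // => i hi.
  by rewrite hXY // erj.
apply: le_trans (ler_norm_sum _ _ _) _.
pose P (a : joint) := \prod_(i | (i != j) && (i != r)) X i (a i).
have P0 a : 0 <= P a.
  by apply: prodr_ge0 => i /andP[_ hi]; exact: simplex_ge0 _ _ (hX i hi).
apply: (@le_trans _ _ (\sum_(a : joint | a j == k) `|X r (a r) - Y r (a r)| * P a)).
  apply: ler_sum => a _.
  have eX : \prod_(i | i != j) X i (a i) = X r (a r) * P a by rewrite (bigD1 r).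
  have eY : \prod_(i | i != j) Y i (a i) = Y r (a r) * P a.
    rewrite (bigD1 r) //=; congr (_ * _); apply: eq_bigr => i /andP[_ hi].
    by rewrite hXY.
  rewrite -mulrBl eX eY -mulrBl normrM normrM (ger0_norm (P0 a)).
  rewrite -[Y in _ <= Y]mulr1; apply: ler_wpM2l; last exact: (bnd _ _ _ hZ).
  exact: mulr_ge0.
pose G i k' := if i == j then (k' == k)%:R else if i == r then `|X r k' - Y r k'| else X i k'.
rewrite le_eqVlt; apply/orP; left; apply/eqP.
transitivity (\sum_(a : joint) \prod_i G i (a i)).
  rewrite big_mkcond; apply: eq_bigr => a _.
  rewrite [in RHS](bigD1 j) //= {1}/G eqxx [in RHS](bigD1 r) //= {1}/G (negbTE hrj) eqxx.
  rewrite [in RHS](eq_bigr (fun i => X i (a i))); last first.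
    by move=> i /andP[/negbTE h1 /negbTE h2]; rewrite /G h1 h2.
  by case: (a j == k); rewrite ?mul1r ?mul0r.
rewrite prodF_sum (bigD1 j) //= {1}/G eqxx sum_ind mul1r.
rewrite (bigD1 r) //=.
have -> : \sum_k0 G r k0 = \sum_k' `|X r k' - Y r k'|.
  by apply: eq_bigr => k' _; rewrite /G (negbTE hrj) eqxx.
rewrite [\prod_(i | _ && _) _]big1 ?mulr1 // => i /andP[h1 h2].
by rewrite /G (negbTE h1) (negbTE h2); exact: simplex_sum _ (hX i h2).
Qed.

Lemma ucost_lip j X Y Z k : Pz Z -> (forall i, in_simplex (X i)) ->
  (forall i, in_simplex (Y i)) ->
  `|ucost j X Z k - ucost j Y Z k| <= \sum_i \sum_k' `|X i k' - Y i k'|.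
Proof.
move=> hZ hX hY.
pose H (n : nat) (i : 'I_J) := if (i < n)%N then Y i else X i.
pose f n := ucost j (H n) Z k.
have f0 : f 0%N = ucost j X Z k by apply: ucost_ext.
have fJ : f J = ucost j Y Z k by apply: ucost_ext => i k' _; rewrite /H ltn_ord.
rewrite -f0 -fJ -opprB normrN -(telescope_sumr f (leq0n J)).
apply: le_trans (ler_norm_sum _ _ _) _.
rewrite big_mkord; apply: ler_sum => i _.
rewrite distrC; apply: le_trans (@ucost_step j (H i) (H i.+1) Z i k hZ _ _) _.
- move=> i' hi'; rewrite /H.
  have hne : (nat_of_ord i' != nat_of_ord i) by exact: hi'.
  have -> : (i' < i.+1)%N = (i' < i)%N by rewrite ltnS leq_eqVlt (negbTE hne).
  by [].
- by move=> i' _; rewrite /H; case: ifP.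
- by rewrite /H ltnn ltnSn.
Qed.

Lemma Qpart j (g : 'I_K -> R) X Z :
  \sum_(a : joint) g (a j) * \prod_(i | i != j) X i (a i) * ip (phi j a) Z
  = \sum_k g k * ucost j X Z k.
Proof.
rewrite (partition_big (fun a : joint => a j) xpredT) //=.
apply: eq_bigr => k _; rewrite ucostE mulr_sumr.
apply: eq_big => [a|a /eqP <-]; first by [].
by rewrite mulrA.
Qed.

Lemma exp_cost_prod j (X : 'I_J -> 'I_K -> R) Z :
  exp_cost (phi j) (prod_dist X) Z = \sum_k X j k * ucost j X Z k.
Proof.
rewrite /exp_cost -Qpart; apply: eq_bigr => a _.
by rewrite /prod_dist (bigD1 j).
Qed.

Lemma marg_prod j (X : 'I_J -> 'I_K -> R) (a : joint) : in_simplex (X j) ->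
  marginal_minus j (prod_dist X) a = \prod_(i | i != j) X i (a i).
Proof.
move=> hXj.
pose F i k' := if i == j then X j k' else (k' == a i)%:R * X i k'.
transitivity (\sum_(b : joint) \prod_i F i (b i)).
  rewrite /marginal_minus big_mkcond; apply: eq_bigr => b _.
  rewrite [in RHS](bigD1 j) //= {1}/F eqxx /prod_dist (bigD1 j) //=.
  case: (boolP (agree_off j a b)) => hab.
    congr (_ * _); apply: eq_bigr => i hi.
    rewrite /F (negbTE hi).
    move/forallP: hab => /(_ i); rewrite hi /= eq_sym => /eqP ->.
    by rewrite eqxx mul1r.
  move/forallPn: hab => [i]; rewrite negb_imply => /andP[hi hab].
  rewrite (bigD1 i) //= {1}/F (negbTE hi) eq_sym (negbTE hab).
  by rewrite !mul0r mulr0.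
rewrite prodF_sum (bigD1 j) //= {1}/F eqxx (simplex_sum _ hXj) mul1r.
apply: eq_bigr => i hi; rewrite /F (negbTE hi).
rewrite (bigD1 (a i)) //= eqxx mul1r big1 ?addr0 // => k' /negbTE ->.
by rewrite mul0r.
Qed.
End Game.

Arguments ucost {R J K d} phi j X Z k.
Arguments ucostE {R J K d} phi j X Z k.
Arguments ucost_ext {R J K d} phi j X Y Z k _.
Arguments ucost_bound {R J K d} phi Pz bnd j X Z k _ _.
Arguments ucost_lip {R J K d} phi Pz bnd j X Y Z k _ _ _.
Arguments Qpart {R J K d} phi j g X Z.
Arguments exp_cost_prod {R J K d} phi j X Z.
Arguments marg_prod {R J K} j X a _.
Arguments sm {R K} eta rho h l.
Arguments Hf {R K} eta rho p.
Arguments sm_simplex {R K} eta K0 rho h _.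
Arguments sm_shift {R K} eta rho c h l.
Arguments sm_stab {R K} eta K0 rho a b D _ _ _ _ _.
Arguments H_step {R K} eta K0 rho h u p M _ _ _ _ _ _.
Arguments Hf_le0 {R K} eta K0 rho p _ _ _.
Arguments Hf_init {R K} eta K0 p _.

Section Dyn.
Variables (R : realType) (J K d m : nat) (eta : R).
Variable (z : 'I_m -> 'rV[R]_d).
Variable (phi : 'I_J -> {ffun 'I_J -> 'I_K} -> 'rV[R]_d).
Variables (Zs : nat -> 'I_m) (Zhat : 'I_J -> nat -> 'I_m).
Hypothesis K0 : (0 < K)%N.
Hypothesis bnd : forall j a zz, `|ip (phi j a) (z zz)| <= 1.
Let Pz (Z : 'rV[R]_d) := exists zz, Z = z zz.
Let bnd' : forall j a (Z : 'rV[R]_d), Pz Z -> `|ip (phi j a) Z| <= 1.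
Proof. by move=> j a Z [zz ->]; exact: bnd. Qed.

Local Notation st t := (pomwu_states eta z phi Zs Zhat t).
Local Notation W t := (pomwu_profile eta z phi Zs Zhat t).
Definition Vp t i := pomwu_play eta z (st t) i (Zs t).
Definition uc t i k := ucost phi i (W t) (z (Zs t)) k.
Definition hint t i k := (z (Zs t) *m st_Psi (st t) i (Zs t)) 0 k.

Fixpoint last_vis (t : nat) (zz : 'I_m) : option nat :=
  match t with
  | 0 => None
  | t'.+1 => if Zs t' == zz then Some t' else last_vis t' zz
  end.

Lemma rho_step t i k :
  st_rho (st t.+1) i (Zs t) k = st_rho (st t) i (Zs t) k * expR (- eta * uc t i k).
Proof. by rewrite /= eqxx. Qed.

Lemma rho_other t i zz k : zz != Zs t ->
  st_rho (st t.+1) i zz k = st_rho (st t) i zz k.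
Proof. by move=> h; rewrite /= (negbTE h). Qed.

Lemma Psi_step t i : st_Psi (st t.+1) i (Zs t) = Phi (phi i) i (W t).
Proof. by rewrite /= eqxx. Qed.

Lemma Psi_other t i zz : zz != Zs t -> st_Psi (st t.+1) i zz = st_Psi (st t) i zz.
Proof. by move=> h; rewrite /= (negbTE h). Qed.

Lemma rho_pos t i zz k : 0 < st_rho (st t) i zz k.
Proof.
elim: t zz k => [|t IH] zz k /=; first by rewrite invr_gt0 ltr0n.
case: ifP => _; last exact: IH.
by apply: mulr_gt0; [exact: IH | exact: expR_gt0].
Qed.

Lemma W_simplex t i : in_simplex (W t i).
Proof. exact: (sm_simplex eta K0 _ _ (rho_pos t i (Zhat i t))). Qed.

Lemma V_simplex t i : in_simplex (Vp t i).
Proof. exact: (sm_simplex eta K0 _ _ (rho_pos t i (Zs t))). Qed.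

Lemma inv t i zz :
  match last_vis t zz with
  | None => (forall k, st_rho (st t) i zz k = (K%:R)^-1) /\ st_Psi (st t) i zz = 0
  | Some s => [/\ (s < t)%N, Zs s = zz,
                 (forall k, st_rho (st t) i zz k = st_rho (st s.+1) i zz k) &
                 st_Psi (st t) i zz = st_Psi (st s.+1) i zz]
  end.
Proof.
elim: t => [|t IH]; first by [].
have -> : last_vis t.+1 zz = if Zs t == zz then Some t else last_vis t zz by [].
case: (eqVneq (Zs t) zz) => [<-|hne].
  by split => //; move=> k.
have hne' : zz != Zs t by rewrite eq_sym.
move: IH; case: (last_vis t zz) => [s|].
  case=> h1 h2 h3 h4; split => //; first exact: ltnW.
    by move=> k; rewrite rho_other // h3.
  by rewrite Psi_other // h4.
by case=> h1 h2; split => [k|]; [rewrite rho_other // h1 | rewrite Psi_other].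
Qed.

Lemma u_bound t i k : `|uc t i k| <= 1.
Proof. by apply: (ucost_bound phi Pz bnd'); [exists (Zs t) | move=> i' _; exact: W_simplex]. Qed.

Lemma hint_prev t i s : last_vis t (Zs t) = Some s ->
  Zs s = Zs t /\ (forall k, hint t i k = uc s i k).
Proof.
move=> e; have := inv t i (Zs t); rewrite e => -[h1 h2 h3 h4].
split => // k; rewrite /hint h4 -h2 Psi_step /uc.
by [].
Qed.

Lemma hint_none t i : last_vis t (Zs t) = None -> forall k, hint t i k = 0.
Proof.
move=> e k; have := inv t i (Zs t); rewrite e => -[_ h].
by rewrite /hint h mulmx0 mxE.
Qed.

Lemma hint_bound t i k : `|hint t i k| <= 1.
Proof.
case e : (last_vis t (Zs t)) => [s|].
  by have [_ ->] := hint_prev _ i _ e; exact: u_bound.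
by rewrite (hint_none _ i e) normr0.
Qed.

Definition ev i r : R := (Zhat i r != Zs r)%:R.
Definition E r : R := \sum_(i < J) ev i r.

Lemma ev_ge0 i r : 0 <= ev i r.
Proof. by rewrite /ev ler0n. Qed.
Lemma ev_le1 i r : ev i r <= 1.
Proof. by rewrite /ev; case: (_ != _). Qed.
Lemma E_ge0 r : 0 <= E r.
Proof. by apply: sumr_ge0 => i _; exact: ev_ge0. Qed.
Lemma E_leJ r : E r <= J%:R.
Proof.
apply: le_trans (ler_sum _ (fun i _ => ev_le1 i r)) _.
by rewrite sumr_const card_ord.
Qed.

Lemma VpE t i k : Vp t i k = sm eta (st_rho (st t) i (Zs t)) (hint t i) k.
Proof. by []. Qed.

Lemma sm_ext (r1 r2 h1 h2 : 'I_K -> R) l : (forall k, r1 k = r2 k) ->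
  (forall k, h1 k = h2 k) -> sm eta r1 h1 l = sm eta r2 h2 l.
Proof.
move=> e1 e2; rewrite /sm e1 e2; congr (_ / _).
by apply: eq_bigr => k _; rewrite e1 e2.
Qed.

Lemma WV_diff r i : \sum_k `|W r i k - Vp r i k| <= 2 * ev i r.
Proof.
rewrite /ev; case: eqVneq => [e|ne] /=.
  rewrite big1 ?mulr0 // => k _.
  by rewrite /pomwu_profile /Vp e subrr normr0.
have hW := W_simplex r i; have hV := V_simplex r i.
apply: (@le_trans _ _ (\sum_k (W r i k + Vp r i k))).
  apply: ler_sum => k _; rewrite ler_norml.
  have := simplex_ge0 _ k hW; have := simplex_ge0 _ k hV.
  move=> h1 h2; apply/andP; split; lra.
rewrite big_split /= (simplex_sum _ hW) (simplex_sum _ hV); lra.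
Qed.

Lemma VV_diff t s i : last_vis t (Zs t) = Some s -> 0 <= eta -> eta * 3 <= 1/4 ->
  \sum_k `|Vp t i k - Vp s i k| <= 4 * (eta * 3).
Proof.
move=> e he he3.
have := inv t i (Zs t); rewrite e => -[_ hz hr _].
have [_ hh] := hint_prev t i s e.
have -> : \sum_k `|Vp t i k - Vp s i k| =
  \sum_k `|sm eta (st_rho (st s) i (Zs s)) (fun k => uc s i k + uc s i k) k
          - sm eta (st_rho (st s) i (Zs s)) (hint s i) k|.
  apply: eq_bigr => k _; rewrite VpE VpE -sm_shift; congr (`|_ - _|).
  apply: sm_ext => k'; last exact: hh.
  by rewrite hr -hz rho_step.
apply: (sm_stab eta K0) => //; first exact: rho_pos.
move=> k; have := hint_bound s i k; have := u_bound s i k.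
rewrite !ler_norml => /andP[h1 h2] /andP[h3 h4]; apply/andP; split; lra.
Qed.

Lemma W_diff t s i : last_vis t (Zs t) = Some s -> 0 <= eta -> eta * 3 <= 1/4 ->
  \sum_k `|W t i k - W s i k| <= 2 * ev i t + 12 * eta + 2 * ev i s.
Proof.
move=> e he he3.
have h1 := WV_diff t i; have h2 := VV_diff t s i e he he3; have h3 := WV_diff s i.
apply: (@le_trans _ _ (\sum_k (`|W t i k - Vp t i k| + `|Vp t i k - Vp s i k|
                             + `|Vp s i k - W s i k|))).
  apply: ler_sum => k _.
  have -> : W t i k - W s i k =
    (W t i k - Vp t i k) + (Vp t i k - Vp s i k) + (Vp s i k - W s i k) by ring.
  apply: le_trans (ler_normD _ _) _; rewrite lerD2r; exact: ler_normD.
rewrite !big_split /=.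
have -> : \sum_k `|Vp s i k - W s i k| = \sum_k `|W s i k - Vp s i k|.
  by apply: eq_bigr => k _; rewrite distrC.
lra.
Qed.

Lemma diff_bound t s j k : last_vis t (Zs t) = Some s -> 0 <= eta -> eta * 3 <= 1/4 ->
  `|uc t j k - hint t j k| <= 12 * eta * J%:R + 2 * E t + 2 * E s.
Proof.
move=> e he he3.
have [hz hh] := hint_prev t j s e.
rewrite hh /uc hz.
apply: le_trans (ucost_lip phi Pz bnd' j _ _ _ k (ex_intro _ (Zs t) erefl) (W_simplex t) (W_simplex s)) _.
apply: (@le_trans _ _ (\sum_(i < J) (2 * ev i t + 12 * eta + 2 * ev i s))).
  by apply: ler_sum => i _; exact: W_diff.
rewrite !big_split /= -!mulr_sumr sumr_const card_ord -/(E t) -/(E s).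
rewrite -mulr_natr; lra.
Qed.

Lemma Hf_ext (r1 r2 p : 'I_K -> R) : (forall k, r1 k = r2 k) ->
  Hf eta r1 p = Hf eta r2 p.
Proof.
move=> e; rewrite /Hf; congr ((_ - ln _) / _); apply: eq_bigr => k _; by rewrite e.
Qed.

Section Agent.
Variables (j : 'I_J) (pi : 'I_m -> 'I_K -> R).
Hypothesis hpi : forall zz, in_simplex (pi zz).

Definition Pot t := \sum_(zz < m) Hf eta (st_rho (st t) j zz) (pi zz).
Definition gz t zz : R :=
  match last_vis t zz with None => 1 | Some s => 12 * J%:R * E s end.
Definition Sf t := \sum_(zz < m) gz t zz.
Definition reg t := \sum_k (W t j k - pi (Zs t) k) * uc t j k.

Lemma Pot_step t : Pot t.+1 - Pot t =
  Hf eta (fun k => st_rho (st t) j (Zs t) k * expR (- eta * uc t j k)) (pi (Zs t))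
  - Hf eta (st_rho (st t) j (Zs t)) (pi (Zs t)).
Proof.
rewrite /Pot (bigD1 (Zs t)) // [X in _ - X](bigD1 (Zs t)) //.
rewrite (eq_bigr (fun zz => Hf eta (st_rho (st t) j zz) (pi zz))); last first.
  by move=> zz hz; apply: Hf_ext => k; rewrite rho_other.
rewrite (Hf_ext _ (fun k => st_rho (st t) j (Zs t) k * expR (- eta * uc t j k))); last first.
  by move=> k; rewrite rho_step.
rewrite /=; ring.
Qed.

Lemma gz_ge0 t zz : 0 <= gz t zz.
Proof.
rewrite /gz; case: (last_vis t zz) => [s|] //.
by apply: mulr_ge0; [apply: mulr_ge0 => //; exact: ler0n | exact: E_ge0].
Qed.

Lemma Sf_step t : Sf t.+1 = Sf t - gz t (Zs t) + 12 * J%:R * E t.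
Proof.
rewrite /Sf (bigD1 (Zs t)) //= [X in _ = X - _ + _](bigD1 (Zs t)) //=.
rewrite (eq_bigr (fun zz => gz t zz)); last first.
  move=> zz hz; rewrite /gz /=.
  by have -> : (Zs t == zz) = false by apply/negbTE; rewrite eq_sym.
rewrite {1}/gz /= eqxx; ring.
Qed.

Lemma Sf0 : Sf 0 = m%:R.
Proof. by rewrite /Sf /gz /= sumr_const card_ord. Qed.

Lemma Pot0 : Pot 0 = m%:R * (- ln (K%:R) / eta).
Proof.
rewrite /Pot (eq_bigr (fun _ => - ln (K%:R) / eta)).
  by rewrite sumr_const card_ord mulr_natl.
by move=> zz _; apply: (Hf_init eta K0).
Qed.

Lemma Msq t k : 0 <= eta -> eta * 3 <= 1/4 ->
  (uc t j k - hint t j k) ^+ 2 <=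
  432 * eta ^+ 2 * J%:R ^+ 2 + 12 * J%:R * E t + gz t (Zs t).
Proof.
move=> he he3.
have Et0 := E_ge0 t; have EtJ := E_leJ t.
have J0 : 0 <= J%:R :> R by exact: ler0n.
rewrite /gz; case e : (last_vis t (Zs t)) => [s|].
  have Es0 := E_ge0 s; have EsJ := E_leJ s.
  have hb := diff_bound t s j k e he he3.
  set x := uc t j k - hint t j k in hb *.
  set D := 12 * eta * J%:R + 2 * E t + 2 * E s in hb.
  have D0 : 0 <= D by rewrite /D; nra.
  have hx2 : x ^+ 2 <= D ^+ 2.
    by rewrite -real_normK ?num_real // ler_pXn2r ?nnegrE //.
  apply: le_trans hx2 _; rewrite /D !expr2.
  have q1 : E t * E t <= J%:R * E t by nra.
  have q2 : E s * E s <= J%:R * E s by nra.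
  nra.
rewrite (hint_none t j e) subr0.
have := u_bound t j k; rewrite ler_norml => /andP[h1 h2].
have : 0 <= 432 * eta ^+ 2 * J%:R ^+ 2 by rewrite !expr2; nra.
rewrite expr2; nra.
Qed.

Lemma reg_step t : 0 < eta -> eta * 3 <= 1/4 ->
  reg t <= (Pot t.+1 - Pot t)
     + 2 * eta * (432 * eta ^+ 2 * J%:R ^+ 2 + 12 * J%:R * E t + gz t (Zs t))
     + 2 * ev j t.
Proof.
move=> he he3.
have -> : reg t = \sum_k (Vp t j k - pi (Zs t) k) * uc t j k
                 + \sum_k (W t j k - Vp t j k) * uc t j k.
  by rewrite -big_split /=; apply: eq_bigr => k _; ring.
have h2 : \sum_k (W t j k - Vp t j k) * uc t j k <= 2 * ev j t.
  apply: le_trans (WV_diff t j); apply: ler_sum => k _.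
  apply: le_trans (ler_norm _) _; rewrite normrM.
  rewrite -[X in _ <= X]mulr1; apply: ler_wpM2l => //; exact: u_bound.
have h1 := H_step eta K0 (st_rho (st t) j (Zs t)) (hint t j) (uc t j) (pi (Zs t))
  (432 * eta ^+ 2 * J%:R ^+ 2 + 12 * J%:R * E t + gz t (Zs t)) (rho_pos t j (Zs t))
  he ltac:(lra) (hpi (Zs t)) _ (fun k => Msq t k (ltW he) he3).
rewrite Pot_step.
have h1' : \sum_k (Vp t j k - pi (Zs t) k) * uc t j k <=
   Hf eta (fun k => st_rho (st t) j (Zs t) k * expR (- eta * uc t j k)) (pi (Zs t))
   - Hf eta (st_rho (st t) j (Zs t)) (pi (Zs t))
   + 2 * eta * (432 * eta ^+ 2 * J%:R ^+ 2 + 12 * J%:R * E t + gz t (Zs t)).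
  apply: h1 => k; have := u_bound t j k; have := hint_bound t j k.
  rewrite !ler_norml => /andP[a1 a2] /andP[a3 a4]; apply/andP; split; lra.
lra.
Qed.

Lemma reg_sum T : 0 < eta -> eta * 3 <= 1/4 ->
  \sum_(t < T) reg t <= m%:R * ln (K%:R) / eta + 2 * eta * m%:R
    + 864 * eta ^+ 3 * J%:R ^+ 2 * T%:R + 48 * eta * J%:R * \sum_(t < T) E t
    + 2 * \sum_(t < T) ev j t.
Proof.
move=> he he3.
pose a t := Pot t - 2 * eta * Sf t.
have step t : reg t <= (a t.+1 - a t) +
   (864 * eta ^+ 3 * J%:R ^+ 2 + 48 * eta * J%:R * E t + 2 * ev j t).
  have h := reg_step t he he3.
  have hg : gz t (Zs t) = Sf t - Sf t.+1 + 12 * J%:R * E t by rewrite Sf_step; ring.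
  rewrite hg in h; apply: le_trans h _.
  rewrite le_eqVlt; apply/orP; left; apply/eqP; rewrite /a; ring.
apply: (@le_trans _ _ (\sum_(t < T) ((a t.+1 - a t) +
   (864 * eta ^+ 3 * J%:R ^+ 2 + 48 * eta * J%:R * E t + 2 * ev j t)))).
  by apply: ler_sum => t _; exact: step.
rewrite big_split /=.
have -> : \sum_(t < T) (a t.+1 - a t) = a T - a 0%N.
  by rewrite -(big_mkord xpredT (fun t => a t.+1 - a t)) telescope_sumr.
rewrite !big_split /= sumr_const card_ord -!mulr_sumr.
have aT : a T <= 0.
  rewrite /a; have : 0 <= Sf T by apply: sumr_ge0 => zz _; exact: gz_ge0.
  have : Pot T <= 0.
    rewrite /Pot; apply: sumr_le0 => zz _.
    by apply: (Hf_le0 eta K0) => //; exact: rho_pos.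
  move=> h1 h2; have : 0 <= 2 * eta * Sf T by apply: mulr_ge0 => //; lra.
  lra.
have a0 : a 0%N = m%:R * (- ln (K%:R) / eta) - 2 * eta * m%:R by rewrite /a Pot0 Sf0.
rewrite a0 -[_ *+ T]mulr_natr.
have e1 : m%:R * (- ln K%:R / eta) = - (m%:R * ln K%:R / eta) by rewrite mulrA mulrN mulNr.
rewrite e1; lra.
Qed.

Lemma reg_le2 t : reg t <= 2.
Proof.
have hW := W_simplex t j; have hp := hpi (Zs t).
apply: (@le_trans _ _ (\sum_k (W t j k + pi (Zs t) k))).
  apply: ler_sum => k _.
  have := u_bound t j k; rewrite ler_norml => /andP[h1 h2].
  have := simplex_ge0 _ k hW; have := simplex_ge0 _ k hp => g1 g2; nra.
rewrite big_split /= (simplex_sum _ hW) (simplex_sum _ hp); lra.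
Qed.
End Agent.

Lemma sum_ev T j : \sum_(t < T) ev j t = (mistakes T Zs Zhat j)%:R.
Proof. by rewrite /mistakes natr_sum. Qed.

Lemma sum_E T : \sum_(t < T) E t <= J%:R * (max_mistakes T Zs Zhat)%:R.
Proof.
rewrite /E exchange_big /=.
rewrite (eq_bigr (fun i => (mistakes T Zs Zhat i)%:R)); last by move=> i _; exact: sum_ev.
apply: (@le_trans _ _ (\sum_(i < J) (max_mistakes T Zs Zhat)%:R)).
  apply: ler_sum => i _.
  by rewrite ler_nat /max_mistakes; exact: (leq_bigmax i).
by rewrite sumr_const card_ord mulr_natl.
Qed.

Section CCE.
Variable T : nat.
Local Notation nc zz := (n_ctx T Zs zz).

Lemma avg_sum (g : nat -> R) (F : 'I_m -> R) :
  (forall zz, (0 < nc zz)%N -> F zz = (nc zz)%:R^-1 * \sum_(s < T | Zs s == zz) g s) ->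
  \sum_(t < T) F (Zs t) = \sum_(t < T) g t.
Proof.
move=> hF.
rewrite (partition_big (fun t : 'I_T => Zs t) xpredT) //=.
rewrite [RHS](partition_big (fun t : 'I_T => Zs t) xpredT) //=.
apply: eq_bigr => zz _.
have e1 : \sum_(t < T | Zs t == zz) F (Zs t) = (nc zz)%:R * F zz.
  rewrite (eq_bigr (fun _ => F zz)); last by move=> t /eqP ->.
  rewrite big_mkcond /= /n_ctx natr_sum mulr_suml; apply: eq_bigr => t _.
  by case: (Zs t == zz); rewrite ?mul1r ?mul0r.
rewrite e1; case: (posnP (nc zz)) => hn.
  rewrite hn mul0r big1 // => s hs.
  have : (0 < nc zz)%N by rewrite /n_ctx (bigD1 s) //= hs.
  by rewrite hn.
rewrite hF // mulrA mulfV ?mul1r; last by rewrite pnatr_eq0 -lt0n.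
by apply: eq_bigl => t.
Qed.

Variables (j : 'I_J) (pi : 'I_m -> 'I_K -> R).
Hypothesis hpi : forall zz, in_simplex (pi zz).
Local Notation nu := (nu_hat T (fun t => W t) Zs).

Lemma exp_nu zz : (0 < nc zz)%N ->
  exp_cost (phi j) (nu zz) (z zz) =
  (nc zz)%:R^-1 * \sum_(s < T | Zs s == zz) \sum_k W s j k * uc s j k.
Proof.
move=> hn; rewrite /exp_cost /nu_hat hn.
under eq_bigr do rewrite -mulrA mulr_suml.
rewrite -mulr_sumr exchange_big /=; congr (_ * _).
apply: eq_bigr => s /eqP hs.
rewrite -exp_cost_prod /exp_cost /uc hs.
by [].
Qed.

Lemma exp_dev zz : (0 < nc zz)%N ->
  exp_cost (phi j) (dev_dist j (pi zz) (nu zz)) (z zz) =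
  (nc zz)%:R^-1 * \sum_(s < T | Zs s == zz) \sum_k pi zz k * uc s j k.
Proof.
move=> hn.
have hm a : marginal_minus j (nu zz) a =
    (nc zz)%:R^-1 * \sum_(s < T | Zs s == zz) \prod_(i | i != j) W s i (a i).
  rewrite /marginal_minus /nu_hat hn -mulr_sumr exchange_big /=; congr (_ * _).
  apply: eq_bigr => s _; rewrite -(marg_prod j (W s) a (W_simplex s j)).
  by [].
rewrite /exp_cost /dev_dist.
under eq_bigr do rewrite hm.
have -> : \sum_(a : {ffun 'I_J -> 'I_K}) pi zz (a j) * ((nc zz)%:R^-1 *
     \sum_(s < T | Zs s == zz) \prod_(i | i != j) W s i (a i)) * ip (phi j a) (z zz)
   = (nc zz)%:R^-1 * \sum_(s < T | Zs s == zz) \sum_(a : {ffun 'I_J -> 'I_K})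
       pi zz (a j) * \prod_(i | i != j) W s i (a i) * ip (phi j a) (z zz).
  rewrite exchange_big /= mulr_sumr; apply: eq_bigr => a _.
  set I := ip _ _; clearbody I; rewrite !mulr_sumr mulr_suml; apply: eq_bigr => s _; ring.
congr (_ * _); apply: eq_bigr => s /eqP hs.
by rewrite Qpart /uc hs.
Qed.

Lemma cce_identity :
  \sum_(t < T) exp_cost (phi j) (nu (Zs t)) (z (Zs t))
  - \sum_(t < T) exp_cost (phi j) (dev_dist j (pi (Zs t)) (nu (Zs t))) (z (Zs t))
  = \sum_(t < T) reg j pi t.
Proof.
rewrite -sumrB.
apply: (avg_sum (fun t => reg j pi t)
  (fun zz => exp_cost (phi j) (nu zz) (z zz)
           - exp_cost (phi j) (dev_dist j (pi zz) (nu zz)) (z zz))).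
move=> zz hn; rewrite exp_nu // exp_dev // -mulrBr -sumrB; congr (_ * _).
apply: eq_bigr => s /eqP hs; rewrite /reg -sumrB hs.
by apply: eq_bigr => k _; ring.
Qed.
End CCE.

Lemma reg_total T j pi : (forall zz, in_simplex (pi zz)) -> 0 < eta -> eta * 3 <= 1/4 ->
  \sum_(t < T) reg j pi t <= m%:R * ln (K%:R) / eta + 2 * eta * m%:R
    + 864 * eta ^+ 3 * J%:R ^+ 2 * T%:R
    + 48 * eta * J%:R ^+ 2 * (max_mistakes T Zs Zhat)%:R
    + 2 * (max_mistakes T Zs Zhat)%:R.
Proof.
move=> hpi he he3.
apply: le_trans (reg_sum j pi hpi T he he3) _.
have h1 := sum_E T.
have h2 : \sum_(t < T) ev j t <= (max_mistakes T Zs Zhat)%:R.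
  by rewrite sum_ev ler_nat /max_mistakes; exact: (leq_bigmax j).
have h3 : 48 * eta * J%:R * \sum_(t < T) E t <=
          48 * eta * J%:R * (J%:R * (max_mistakes T Zs Zhat)%:R).
  by apply: ler_wpM2l => //; apply: mulr_ge0; [lra|exact: ler0n].
rewrite expr2 -mulrA; lra.
Qed.

Lemma cce_from_reg T eps : (0 < T)%N ->
  (forall j pi, (forall zz, in_simplex (pi zz)) -> \sum_(t < T) reg j pi t <= T%:R * eps) ->
  is_contextual_CCE T z phi Zs (nu_hat T (fun t => W t) Zs) eps.
Proof.
move=> hT h j pi hpi.
have e := cce_identity T j pi.
have hr := h j pi hpi.
have hTp : 0 < T%:R :> R by rewrite ltr0n.
have H (X Y S : R) : X - Y = S -> S <= T%:R * eps -> T%:R^-1 * X <= T%:R^-1 * Y + eps.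
  move=> hXY hS; have : T%:R^-1 * X - T%:R^-1 * Y <= eps.
    by rewrite -mulrBr hXY ler_pdivrMl.
  lra.
exact: (H _ _ _ e hr).
Qed.
End Dyn.

Section Arith.
Variable R : realType.

Lemma root4_le (a b : R) : 0 <= a -> 0 <= b -> a ^+ 4 <= b ^+ 4 -> a <= b.
Proof.
move=> ha hb h; rewrite -(@ler_pXn2r _ 4) ?nnegrE //.
Qed.

Lemma root2_le (a b : R) : 0 <= a -> 0 <= b -> a ^+ 2 <= b ^+ 2 -> a <= b.
Proof.
move=> ha hb h; rewrite -(@ler_pXn2r _ 2) ?nnegrE //.
Qed.

Lemma arith_main (x y s lK Lb m eta : R) : 0 < x -> 0 < y -> 1 <= s ->
  1/2 <= lK -> 0 <= Lb -> 0 <= m -> lK * (Lb + m) = x ^+ 4 ->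
  s ^+ 4 * Lb <= y ^+ 4 -> eta * (s * y) = x -> eta * 12 <= 1 ->
  m * lK / eta + 2 * eta * m + 864 * eta ^+ 3 * (s ^+ 2) ^+ 2 * y ^+ 4
  + 48 * eta * (s ^+ 2) ^+ 2 * Lb + 2 * Lb <= 3456 * x ^+ 3 * s * y.
Proof.
move=> hx hy hs hlK hLb hm hA hL he he12.
have hsy : 0 < s * y by apply: mulr_gt0 => //; lra.
have hep : 0 < eta.
  by rewrite -(pmulr_lgt0 _ hsy) he.
have x3 : 0 <= x ^+ 3 by apply: exprn_ge0; lra.
have hLK : lK * Lb <= x ^+ 4.
  rewrite -hA; have : 0 <= lK * m by apply: mulr_ge0; lra.
  lra.
have mlK : m * lK <= x ^+ 4.
  rewrite -hA; have : 0 <= lK * Lb by apply: mulr_ge0; lra.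
  lra.
have x4 : 0 <= x ^+ 4 by apply: exprn_ge0; lra.
have m2 : m <= 2 * x ^+ 4 by nra.
have lb2 : Lb <= 2 * x ^+ 4 by nra.
set u := x ^+ 3 * s * y.
have u0 : 0 <= u by rewrite /u; apply: mulr_ge0; [apply: mulr_ge0|]; lra.
have T1 : m * lK / eta <= u.
  rewrite ler_pdivrMr //.
  have e1 : u * eta = x ^+ 4 by rewrite /u -[in RHS]he; rewrite -he; ring.
  by rewrite e1.
have T2 : 2 * eta * m <= u.
  have ex : eta * x ^+ 4 = eta ^+ 2 * u by rewrite /u -he; ring.
  have e2 : eta ^+ 2 <= 1/144 by rewrite expr2; nra.
  have : 2 * eta * m <= 4 * (eta * x ^+ 4) by nra.
  rewrite ex => h; have : eta ^+ 2 * u <= 1/144 * u by apply: ler_wpM2r.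
  lra.
have T3 : 864 * eta ^+ 3 * (s ^+ 2) ^+ 2 * y ^+ 4 = 864 * u.
  by rewrite /u -he; ring.
have s2 : s ^+ 2 * Lb <= 2 * x ^+ 2 * y ^+ 2.
  apply: root2_le.
  - by apply: mulr_ge0 => //; apply: exprn_ge0; lra.
  - by apply: mulr_ge0; [apply: mulr_ge0|apply: exprn_ge0]; try apply: exprn_ge0; lra.
  have e : (s ^+ 2 * Lb) ^+ 2 = (s ^+ 4 * Lb) * Lb by ring.
  rewrite e.
  have y4 : 0 <= y ^+ 4 by apply: exprn_ge0; lra.
  apply: le_trans (ler_pM _ _ hL (lexx Lb)) _.
  - by apply: mulr_ge0 => //; apply: exprn_ge0; lra.
  - by [].
  apply: le_trans (ler_wpM2l y4 lb2) _.
  have : 0 <= x ^+ 4 * y ^+ 4 by apply: mulr_ge0.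
  have e2 : (2 * x ^+ 2 * y ^+ 2) ^+ 2 = 4 * (x ^+ 4 * y ^+ 4) by ring.
  have e3 : y ^+ 4 * (2 * x ^+ 4) = 2 * (x ^+ 4 * y ^+ 4) by ring.
  rewrite e2 e3; lra.
have T4 : 48 * eta * (s ^+ 2) ^+ 2 * Lb <= 96 * u.
  have e : 48 * eta * (s ^+ 2) ^+ 2 * Lb * y = 48 * (x * s) * (s ^+ 2 * Lb).
    by rewrite -he; ring.
  have xs : 0 <= x * s by apply: mulr_ge0; lra.
  have : 48 * eta * (s ^+ 2) ^+ 2 * Lb * y <= 96 * u * y.
    rewrite e; apply: le_trans (ler_wpM2l _ s2) _.
      by apply: mulr_ge0; lra.
    rewrite /u le_eqVlt; apply/orP; left; apply/eqP; ring.
  by rewrite ler_pM2r.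
have T5 : Lb <= 2 * u.
  have s1 : 1 <= s ^+ 4 by rewrite -(expr1n _ 4); apply: lerXn2r; rewrite ?nnegrE; lra.
  have Ly : Lb <= y ^+ 4 by nra.
  have L3 : Lb ^+ 3 <= (2 * x ^+ 4) ^+ 3.
    by apply: lerXn2r; rewrite ?nnegrE //; nra.
  have L4 : Lb ^+ 4 <= (2 * x ^+ 3 * y) ^+ 4.
    have e : Lb ^+ 4 = Lb ^+ 3 * Lb by rewrite exprSr.
    rewrite e; apply: le_trans (ler_pM _ _ L3 Ly) _.
    - by apply: exprn_ge0.
    - by [].
    have e' : (2 * x ^+ 4) ^+ 3 * y ^+ 4 = 8 * (x ^+ 12 * y ^+ 4) by ring.
    have e'' : (2 * x ^+ 3 * y) ^+ 4 = 16 * (x ^+ 12 * y ^+ 4) by ring.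
    rewrite e' e''.
    have : 0 <= x ^+ 12 * y ^+ 4 by apply: mulr_ge0; apply: exprn_ge0; lra.
    lra.
  have : Lb <= 2 * x ^+ 3 * y.
    apply: root4_le => //; apply: mulr_ge0; [apply: mulr_ge0|]; lra.
  have : x ^+ 3 * y <= u.
    have : 0 <= (s - 1) * (x ^+ 3 * y) by apply: mulr_ge0; [lra | apply: mulr_ge0; lra].
    rewrite /u; lra.
  lra.
have -> : 3456 * x ^+ 3 * s * y = 3456 * u by rewrite /u; ring.
lra.
Qed.

Lemma arith_big (x y s eta : R) : 0 < x -> 0 < y -> 1 <= s ->
  eta * (s * y) = x -> 1 < eta * 12 -> 2 <= 3456 * x ^+ 3 * (y ^+ 3)^-1 * s.
Proof.
move=> hx hy hs he h12.
have hsy : 0 < s * y by apply: mulr_gt0 => //; lra.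
have hxy : s * y <= x * 12 by rewrite -he; nra.
have c : (s * y) ^+ 3 <= (x * 12) ^+ 3.
  by apply: lerXn2r; rewrite ?nnegrE //; lra.
have y3 : 0 < y ^+ 3 by apply: exprn_gt0.
have -> : 3456 * x ^+ 3 * (y ^+ 3)^-1 * s = (3456 * x ^+ 3 * s) / y ^+ 3.
  by field; rewrite lt0r_neq0.
rewrite ler_pdivlMr //.
have c' : 2 * ((s * y) ^+ 3 * s) <= 2 * ((x * 12) ^+ 3 * s).
  by rewrite ler_pM2l // ler_pM2r //; lra.
have s4 : 1 <= s ^+ 4 by rewrite -(expr1n _ 4); apply: lerXn2r; rewrite ?nnegrE; lra.
have : y ^+ 3 <= s ^+ 4 * y ^+ 3.
  by rewrite -[X in X <= _]mul1r ler_pM2r.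
have e1 : (s * y) ^+ 3 * s = s ^+ 4 * y ^+ 3 by ring.
have e2 : (x * 12) ^+ 3 * s = 1728 * (x ^+ 3 * s) by ring.
rewrite e1 e2 in c'.
have e3 : 3456 * x ^+ 3 * s = 3456 * (x ^+ 3 * s) by ring.
rewrite e3; lra.
Qed.
End Arith.

Lemma ln2_ge (R : realType) : 1/2 <= ln (2 : R).
Proof.
rewrite -[X in X <= _](@expRK R) ler_ln ?posrE ?expR_gt0 //.
apply: le_trans (exp_le_inv (1/2) _) _; first lra.
have -> : (1 - 1/2 : R) = 2^-1 by field.
by rewrite invrK.
Qed.

Lemma pow_quarter (R : realType) (a : R) : 0 <= a -> (a `^ (1/4)) ^+ 4 = a.
Proof.
move=> ha; rewrite -powR_mulrn ?powR_ge0 // -powRrM.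
have -> : (1/4 : R) * 4%:R = 1 by field.
by rewrite powRr1.
Qed.

Lemma pow_half (R : realType) (a : R) : 0 <= a -> (a `^ (1/2)) ^+ 2 = a.
Proof.
move=> ha; rewrite -powR_mulrn ?powR_ge0 // -powRrM.
have -> : (1/2 : R) * 2%:R = 1 by field.
by rewrite powRr1.
Qed.

Lemma pow_3quarter (R : realType) (a : R) : 0 <= a -> a `^ (3/4) = (a `^ (1/4)) ^+ 3.
Proof.
move=> ha; rewrite -powR_mulrn ?powR_ge0 // -powRrM.
by congr (_ `^ _); field.
Qed.

Lemma simplex_single (R : realType) (K : nat) (w : 'I_K -> R) k :
  (forall k1 k2 : 'I_K, k1 = k2) -> in_simplex w -> w k = 1.
Proof.
move=> hu hw; rewrite -(simplex_sum _ hw) (bigD1 k) //= big1 ?addr0 // => i hi.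
by move: hi; rewrite (hu i k) eqxx.
Qed.

Theorem corollary1 (R : realType) :
  exists cT c_eta C : R, 0 < cT /\ 0 < c_eta /\ 0 < C /\
  forall (J K d m T : nat) (z : 'I_m -> 'rV[R]_d)
         (phi : 'I_J -> {ffun 'I_J -> 'I_K} -> 'rV[R]_d)
         (Zs : nat -> 'I_m) (Zhat : 'I_J -> nat -> 'I_m),
    (2 <= J)%N -> (0 < T)%N ->
    injective z ->
    (forall j a zz, `|ip (phi j a) (z zz)| <= 1) ->
    let Lbar := (max_mistakes T Zs Zhat)%:R : R in
    cT * (J%:R) ^+ 2 * Lbar <= T%:R ->
    let eta := c_eta * (J%:R) `^ (- (1 / 2)) * (T%:R) `^ (- (1 / 4))
               * (ln (K%:R) * (Lbar + m%:R)) `^ (1 / 4) in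
    is_contextual_CCE T z phi Zs
      (nu_hat T (pomwu_profile eta z phi Zs Zhat) Zs)
      (C * (ln (K%:R) * (Lbar + m%:R)) `^ (3 / 4) * (T%:R) `^ (- (3 / 4))
         * (J%:R) `^ (1 / 2)).
Proof.
exists 1, 1, 3456.
split; first lra. split; first lra. split; first lra.
move=> J K d m T z phi Zs Zhat hJ hT _ hb Lbar hL eta.
have m0 : (0 < m)%N by case: (Zs 0%N) => i hi; exact: leq_ltn_trans (leq0n i) hi.
case: (posnP K) => [K0eq|K0].
  move=> j pi hpi; exfalso; subst K.
  by have := simplex_sum _ (hpi (Zs 0%N)); rewrite big_ord0 => /eqP; rewrite eq_sym oner_eq0.
apply: (@cce_from_reg R J K d m eta z phi Zs Zhat K0 T _ hT) => j pi hpi.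
have eps0 : 0 <= 3456 * (ln K%:R * (Lbar + m%:R)) `^ (3 / 4) * T%:R `^ (- (3 / 4))
               * J%:R `^ (1 / 2).
  apply: mulr_ge0; last exact: powR_ge0.
  apply: mulr_ge0; last exact: powR_ge0.
  apply: mulr_ge0; last exact: powR_ge0.
  exact: ler0n.
case: (eqVneq K 1) => [K1|K2].
  apply: (@le_trans _ _ 0); last by apply: mulr_ge0 => //; exact: ler0n.
  apply: sumr_le0 => t _; rewrite /reg.
  have hu (k1 k2 : 'I_K) : k1 = k2.
    case: k1 => [a ha]; case: k2 => [b hb2]; apply: val_inj => /=.
    by move: ha hb2; rewrite K1 !ltnS !leqn0 => /eqP -> /eqP ->.
  rewrite big1 // => k _.
  rewrite (@simplex_single R K _ k hu (@W_simplex R J K d m eta z phi Zs Zhat K0 t j)).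
  by rewrite (@simplex_single R K _ k hu (hpi (Zs t))) subrr mul0r.
have hK2 : (1 < K)%N by rewrite ltn_neqAle eq_sym K2 K0.
have hlK : 1/2 <= ln (K%:R : R).
  apply: le_trans (ln2_ge R) _; rewrite ler_ln ?posrE ?ltr0n // ?ler_nat //.
have Lb0 : 0 <= Lbar by rewrite /Lbar ler0n.
have mR : 1 <= m%:R :> R by rewrite ler1n.
have hA : 0 < ln (K%:R : R) * (Lbar + m%:R) by apply: mulr_gt0; lra.
have [x xE] : exists x, x = (ln (K%:R : R) * (Lbar + m%:R)) `^ (1/4) by eexists.
have [y yE] : exists y, y = (T%:R : R) `^ (1/4) by eexists.
have [s sE] : exists s, s = (J%:R : R) `^ (1/2) by eexists.
have hTR : 0 < T%:R :> R by rewrite ltr0n.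
have hJR : 0 < J%:R :> R by rewrite ltr0n; exact: leq_trans hJ.
have x0 : 0 < x by rewrite xE powR_gt0.
have y0 : 0 < y by rewrite yE powR_gt0.
have s0 : 0 < s by rewrite sE powR_gt0.
have x4 : ln (K%:R : R) * (Lbar + m%:R) = x ^+ 4 by rewrite xE pow_quarter // ltW.
have y4 : T%:R = y ^+ 4 by rewrite yE pow_quarter // ltW.
have s2 : J%:R = s ^+ 2 by rewrite sE pow_half // ltW.
have s1 : 1 <= s.
  apply: (root2_le _ _ _ ler01 (ltW s0)).
  by rewrite expr1n -s2 ler1n; exact: leq_trans hJ.
have etaE : eta = s^-1 * y^-1 * x.
  by rewrite /eta powRN -sE powRN -yE -xE mul1r.
have he : eta * (s * y) = x by rewrite etaE; field; rewrite !lt0r_neq0.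
have epsE : 3456 * (ln (K%:R : R) * (Lbar + m%:R)) `^ (3 / 4) * T%:R `^ (- (3 / 4))
               * J%:R `^ (1 / 2) = 3456 * x ^+ 3 * (y ^+ 3)^-1 * s.
  rewrite pow_3quarter ?(ltW hA) // -xE powRN pow_3quarter ?(ltW hTR) // -yE -sE.
  by [].
rewrite epsE.
case: (lerP (eta * 12) 1) => h12.
  have hep : 0 < eta.
    have hsy : 0 < s * y by apply: mulr_gt0.
    by rewrite -(pmulr_lgt0 _ hsy) he.
  apply: le_trans (@reg_total R J K d m eta z phi Zs Zhat K0 hb T j pi hpi hep _) _; first lra.
  have hL' : s ^+ 4 * Lbar <= y ^+ 4.
    by move: hL; rewrite s2 y4 mul1r -exprM.
  rewrite s2 y4.
  apply: le_trans (@arith_main R _ _ _ _ _ _ _ x0 y0 s1 hlK Lb0 (ler0n _ m) x4 hL' he h12) _.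
  rewrite le_eqVlt; apply/orP; left; apply/eqP.
  by field; rewrite lt0r_neq0.
have h2 := @arith_big R _ _ _ _ x0 y0 s1 he h12.
apply: (@le_trans _ _ (\sum_(t < T) (2 : R))).
  by apply: ler_sum => t _; exact: (@reg_le2 R J K d m eta z phi Zs Zhat K0 hb j pi hpi).
rewrite sumr_const card_ord -[_ *+ T]mulr_natl.
apply: ler_wpM2l => //; exact: ltW hTR.
Qed.
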